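(* Let $h:[0,\infty)\to[0,\infty)$ be concave and non-decreasing, let $u>l\ge0$, and let $(a_k)_{k=1}^n$, $(b_k)_{k=1}^n$ be sequences of non-negative reals with $a_k\le b_k$ for each $k$. Then $$h(a_1+h(a_2+\dots h(a_n+u)))-h(a_1+h(a_2+\dots h(a_n+l)))\ \ge\ h(b_1+h(b_2+\dots h(b_n+u)))-h(b_1+h(b_2+\dots h(b_n+l))).$$
   Context: Throughout the paper all numbers are taken to be non-negative reals. *)

(* Defs.v *)
From Stdlib Require Import Reals List.
Open Scope R_scope.

Fixpoint nest (h : R -> R) (a : list R) (x : R) : R :=
  match a with
  | nil => x
  | a1 :: rest => h (a1 + nest h rest x)
  end.

Definition concave_on_nonneg (h : R -> R) : Prop :=
  forall x y t, 0 <= x -> 0 <= y -> 0 <= t <= 1 ->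
    t * h x + (1 - t) * h y <= h (t * x + (1 - t) * y).

Definition nondecreasing_on_nonneg (h : R -> R) : Prop :=
  forall x y, 0 <= x -> x <= y -> h x <= h y.

(* Main.v *)
Require Import Defs.
From Stdlib Require Import Reals List Lra.
Open Scope R_scope.

Lemma incr_dec (h : R -> R) : concave_on_nonneg h ->
  forall x y d, 0 <= x -> x <= y -> 0 <= d -> h (x + d) - h x >= h (y + d) - h y.
Proof.
  intros Hc x y d Hx Hxy Hd.
  destruct (Req_dec (y + d - x) 0) as [E|E].
  { assert (y = x) by lra. assert (d = 0) by lra. subst. lra. }
  set (L := y + d - x).
  assert (HL : 0 < L) by (unfold L in *; lra).
  assert (H1 := Hc x (y + d) ((y - x) / L) Hx ltac:(lra)).
  assert (H2 := Hc x (y + d) (d / L) Hx ltac:(lra)).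
  assert (T1 : 0 <= (y - x) / L <= 1).
  { split. unfold Rdiv; apply Rmult_le_pos; [lra | apply Rlt_le, Rinv_0_lt_compat; lra].
    unfold Rdiv; apply (Rmult_le_reg_r L); [lra|]; rewrite Rmult_assoc, Rinv_l by lra; unfold L in *; lra. }
  assert (T2 : 0 <= d / L <= 1).
  { split. unfold Rdiv; apply Rmult_le_pos; [lra | apply Rlt_le, Rinv_0_lt_compat; lra].
    unfold Rdiv; apply (Rmult_le_reg_r L); [lra|]; rewrite Rmult_assoc, Rinv_l by lra; unfold L in *; lra. }
  specialize (H1 T1). specialize (H2 T2).
  replace ((y - x) / L * x + (1 - (y - x) / L) * (y + d)) with (x + d) in H1
    by (unfold L in *; field; lra).
  replace (d / L * x + (1 - d / L) * (y + d)) with y in H2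
    by (unfold L in *; field; lra).
  assert (S : (y - x) / L + d / L = 1) by (unfold L in *; field; lra).
  assert (E2 : d / L = 1 - (y - x) / L) by lra.
  rewrite E2 in H2.
  set (t := (y - x) / L) in *. lra.
Qed.

Lemma nest_nonneg h a x : (forall x, 0 <= x -> 0 <= h x) ->
  Forall (fun x => 0 <= x) a -> 0 <= x -> 0 <= nest h a x.
Proof.
  intros Hp Ha Hx; induction Ha; simpl; auto. apply Hp; lra.
Qed.

Lemma nest_mono_x h a x y : (forall x, 0 <= x -> 0 <= h x) ->
  nondecreasing_on_nonneg h ->
  Forall (fun x => 0 <= x) a -> 0 <= x -> x <= y -> nest h a x <= nest h a y.
Proof.
  intros Hp Hm Ha Hx Hxy; induction Ha; simpl; auto.
  apply Hm. pose proof (nest_nonneg h l x Hp Ha Hx); lra. lra.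
Qed.

Lemma nest_mono_l h a b x : (forall x, 0 <= x -> 0 <= h x) ->
  nondecreasing_on_nonneg h ->
  Forall (fun x => 0 <= x) a -> 0 <= x ->
  Forall2 (fun x y => x <= y) a b -> nest h a x <= nest h b x.
Proof.
  intros Hp Hm Ha Hx H2; revert Ha; induction H2; intros Ha; simpl; [lra|].
  inversion Ha; subst.
  apply Hm. pose proof (nest_nonneg h l x Hp H4 Hx); lra.
  specialize (IHForall2 H4). lra.
Qed.

Theorem lemma3 (h : R -> R) (a b : list R) (u l : R) :
  (forall x, 0 <= x -> 0 <= h x) ->
  concave_on_nonneg h ->
  nondecreasing_on_nonneg h ->
  0 <= l -> l < u ->
  length a = length b ->
  Forall (fun x => 0 <= x) a ->
  Forall (fun x => 0 <= x) b ->
  Forall2 (fun x y => x <= y) a b ->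
  nest h a u - nest h a l >= nest h b u - nest h b l.
Proof.
  intros Hp Hc Hm Hl Hlu _ Ha Hb H2.
  revert Ha Hb; induction H2; intros Ha Hb; simpl; [lra|].
  inversion Ha; subst. inversion Hb; subst.
  specialize (IHForall2 H4 H6).
  set (Au := nest h l0 u) in *. set (Al := nest h l0 l) in *.
  set (Bu := nest h l' u) in *. set (Bl := nest h l' l) in *.
  assert (HAl : 0 <= Al) by (apply nest_nonneg; auto).
  assert (HBl : Bl <= Bu) by (apply nest_mono_x; auto; lra).
  assert (HAB : Al <= Bl) by (apply nest_mono_l; auto).
  assert (M : h (x + Al + (Bu - Bl)) <= h (x + Au)) by (apply Hm; lra).
  assert (D := incr_dec h Hc (x + Al) (y + Bl) (Bu - Bl) ltac:(lra) ltac:(lra) ltac:(lra)).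
  replace (y + Bl + (Bu - Bl)) with (y + Bu) in D by ring.
  lra.
Qed.
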